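(* Let $\mathbf A$ be a WHB-algebra. Then $T(\mathbf A)=(\mathcal B(\mathbf A),\cup,\cap,{}^c,G_{\mathbf A},H_{\mathbf A},\emptyset,X(\mathbf A))$ is a tense algebra.
   Context: A WHB-algebra is an algebra $(A,\wedge,\vee,\to,\leftarrow,0,1)$ such that $(A,\wedge,\vee,0,1)$ is a bounded distributive lattice and for all $a,b,c\in A$: $a\to a=1$; $a\to(b\wedge c)=(a\to b)\wedge(a\to c)$; $(a\vee b)\to c=(a\to c)\wedge(b\to c)$; $(a\to b)\wedge(b\to c)\le a\to c$; $a\leftarrow a=0$; $(a\vee b)\leftarrow c=(a\leftarrow c)\vee(b\leftarrow c)$; $a\leftarrow(b\wedge c)=(a\leftarrow b)\vee(a\leftarrow c)$; $a\leftarrow c\le(a\leftarrow b)\vee(b\leftarrow c)$; $a\wedge((a\to b)\leftarrow 0)\le b$; $a\le b\vee(1\to(a\leftarrow b))$. $X(\mathbf A)$ is the set of prime filters of $\mathbf A$, $\sigma_{\mathbf A}(a)=\{P\colon a\in P\}$, $\tau_{\mathbf A}$ the topology on $X(\mathbf A)$ with subbase $\{\sigma_{\mathbf A}(a)\}\cup\{X(\mathbf A)\setminus\sigma_{\mathbf A}(a)\}$, and $\mathcal B(\mathbf A)$ the set of $\tau_{\mathbf A}$-clopen subsets (equivalently, finite unions of sets $\sigma_{\mathbf A}(a)\setminus\sigma_{\mathbf A}(b)$). $(P,Q)\in R_{\mathbf A}$ iff for all $a,b$ ($a\to b\in P$, $a\in Q$ imply $b\in Q$); $(P,Q)\in S_{\mathbf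 A}$ iff for all $a,b$ ($a\in Q$, $b\notin Q$ imply $a\leftarrow b\in P$). $G_{\mathbf A}(U)=\{P\colon R_{\mathbf A}(P)\subseteq U\}$ and $H_{\mathbf A}(U)=\{P\colon S_{\mathbf A}(P)\subseteq U\}$, where $\mathcal R(P)=\{Q\colon(P,Q)\in\mathcal R\}$. A tense algebra is $(\mathbf B,G,H)$ with $\mathbf B$ a Boolean algebra and unary operations $G,H$ such that, with $P(x)=\neg H(\neg x)$ and $F(x)=\neg G(\neg x)$: $P(x)\le y\iff x\le G(y)$ and $F(x)\le y\iff x\le H(y)$ for all $x,y$. *)

(* Defs.v *)
From Stdlib Require Import List.
Import ListNotations.

Set Implicit Arguments.

Record WHB := {
  carrier :> Type;
  meet : carrier -> carrier -> carrier;
  join : carrier -> carrier -> carrier;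
  imp : carrier -> carrier -> carrier;
  coimp : carrier -> carrier -> carrier;
  bot : carrier;
  top : carrier;
  meetA : forall a b c, meet a (meet b c) = meet (meet a b) c;
  joinA : forall a b c, join a (join b c) = join (join a b) c;
  meetC : forall a b, meet a b = meet b a;
  joinC : forall a b, join a b = join b a;
  meet_absorb : forall a b, meet a (join a b) = a;
  join_absorb : forall a b, join a (meet a b) = a;
  meet_distr : forall a b c, meet a (join b c) = join (meet a b) (meet a c);
  join_bot : forall a, join a bot = a;
  meet_top : forall a, meet a top = a;
  (* axioms for imp (using a <= b := meet a b = a) *)
  imp_refl : forall a, imp a a = top;
  imp_meet : forall a b c, imp a (meet b c) = meet (imp a b) (imp a c);
  imp_join : forall a b c, imp (join a b) c = meet (imp a c) (imp b c);
  imp_trans : forall a b c,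
      meet (meet (imp a b) (imp b c)) (imp a c) = meet (imp a b) (imp b c);
  coimp_refl : forall a, coimp a a = bot;
  coimp_join : forall a b c, coimp (join a b) c = join (coimp a c) (coimp b c);
  coimp_meet : forall a b c, coimp a (meet b c) = join (coimp a b) (coimp a c);
  coimp_trans : forall a b c,
      meet (coimp a c) (join (coimp a b) (coimp b c)) = coimp a c;
  ax_mix1 : forall a b, meet (meet a (coimp (imp a b) bot)) b
                        = meet a (coimp (imp a b) bot);
  ax_mix2 : forall a b, meet a (join b (imp top (coimp a b))) = a
}.

Section Dual.
Variable A : WHB.

Definition le (a b : A) : Prop := meet A a b = a.

Definition prime_filter (P : A -> Prop) : Prop :=
  P (top A) /\
  ~ P (bot A) /\
  (forall a b, P a -> le a b -> P b) /\
  (forall a b, P a -> P b -> P (meet A a b)) /\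
  (forall a b, P (join A a b) -> P a \/ P b).

Definition PF : Type := { P : A -> Prop | prime_filter P }.

Definition mem (a : A) (P : PF) : Prop := proj1_sig P a.

Definition pfset : Type := PF -> Prop.

Definition sigma (a : A) : pfset := fun P => mem a P.

Definition sub (U V : pfset) : Prop := forall P, U P -> V P.
Definition cup (U V : pfset) : pfset := fun P => U P \/ V P.
Definition cap (U V : pfset) : pfset := fun P => U P /\ V P.
Definition compl (U : pfset) : pfset := fun P => ~ U P.
Definition emptyset : pfset := fun _ => False.
Definition fullset : pfset := fun _ => True.

(** Subbasic sets of tau_A: sigma(a) (flag true) or X \ sigma(a) (flag false). *)
Definition subbasic (s : bool * A) : pfset :=
  if fst s then sigma (snd s) else compl (sigma (snd s)).

Definition basic (l : list (bool * A)) : pfset :=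
  fun P => forall s, In s l -> subbasic s P.

Definition is_open (U : pfset) : Prop :=
  forall P, U P -> exists l, basic l P /\ sub (basic l) U.

Definition clopen (U : pfset) : Prop := is_open U /\ is_open (compl U).

Definition R_A (P Q : PF) : Prop :=
  forall a b, mem (imp A a b) P -> mem a Q -> mem b Q.
Definition S_A (P Q : PF) : Prop :=
  forall a b, mem a Q -> ~ mem b Q -> mem (coimp A a b) P.

Definition G_A (U : pfset) : pfset := fun P => forall Q, R_A P Q -> U Q.
Definition H_A (U : pfset) : pfset := fun P => forall Q, S_A P Q -> U Q.

End Dual.

Definition tense_algebra_of_sets {X : Type} (B : (X -> Prop) -> Prop)
  (G H : (X -> Prop) -> (X -> Prop)) : Prop :=
  let sub := fun U V : X -> Prop => forall x, U x -> V x in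
  let compl := fun (U : X -> Prop) x => ~ U x in
  B (fun _ => False) /\ B (fun _ => True) /\
  (forall U V, B U -> B V -> B (fun x => U x \/ V x)) /\
  (forall U V, B U -> B V -> B (fun x => U x /\ V x)) /\
  (forall U, B U -> B (compl U)) /\
  (forall U, B U -> B (G U)) /\
  (forall U, B U -> B (H U)) /\
  (forall U V, B U -> B V ->
     (sub (compl (H (compl U))) V <-> sub U (G V))) /\
  (forall U V, B U -> B V ->
     (sub (compl (G (compl U))) V <-> sub U (H V))).

(* Main.v *)
Require Import Defs.
From Stdlib Require Import List Classical.
From mathcomp Require classical_sets boolp.
Import ListNotations.

Lemma asb_iff (P : Prop) : is_true (boolp.asbool P) <-> P.
Proof. split; intro H; [exact (ssrbool.elimT (boolp.asboolP P) H) | exact (ssrbool.introT (boolp.asboolP P) H)]. Qed.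

Lemma zornP (T : Type) (t0 : T) (R : T -> T -> Prop) :
  (forall t, R t t) -> (forall r s t, R r s -> R s t -> R r t) ->
  (forall C : T -> Prop, (forall s t, C s -> C t -> R s t \/ R t s) ->
     exists t, forall s, C s -> R s t) ->
  exists t, forall s, R t s -> R s t.
Proof.
  intros Hr Ht Hc.
  destruct (@classical_sets.ZL_preorder T t0 (fun x y => boolp.asbool (R x y))) as [t Ht0].
  - intro t; apply asb_iff; auto.
  - intros r s t H1 H2; apply asb_iff; apply (proj1 (asb_iff _)) in H1; apply (proj1 (asb_iff _)) in H2; eauto.
  - intros C HC. assert (HC' : forall s t, C s -> C t -> R s t \/ R t s).
    { intros s t Cs Ct. destruct (HC s t Cs Ct) as [H|H]; [left|right]; apply asb_iff; exact H. }
    destruct (Hc C HC') as [t Hts].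
    exists t; intros s Cs; apply asb_iff; auto.
  - exists t; intros s Hs. apply asb_iff. apply Ht0. apply asb_iff. exact Hs.
Qed.

Section W.
Variable A : WHB.
Local Notation mt := (meet A).
Local Notation jn := (join A).
Local Notation tp := (top A).
Local Notation bt := (bot A).
Local Notation le := (le A).

Lemma meet_idem x : mt x x = x.
Proof.
  rewrite <- (join_absorb A x x) at 2. apply meet_absorb.
Qed.

Lemma le_refl x : le x x.
Proof. apply meet_idem. Qed.

Lemma le_trans x y z : le x y -> le y z -> le x z.
Proof. unfold Defs.le; intros H1 H2. rewrite <- H1, <- meetA, H2. reflexivity. Qed.

Lemma meet_le_l x y : le (mt x y) x.
Proof. unfold Defs.le. rewrite (meetC A (mt x y) x), meetA, meet_idem. reflexivity. Qed.

Lemma meet_le_r x y : le (mt x y) y.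
Proof. unfold Defs.le. rewrite <- meetA, meet_idem. reflexivity. Qed.

Lemma le_meet x y z : le z x -> le z y -> le z (mt x y).
Proof. unfold Defs.le; intros H1 H2. rewrite meetA, H1, H2. reflexivity. Qed.

Lemma le_join_l x y : le x (jn x y).
Proof. apply meet_absorb. Qed.

Lemma le_join_r x y : le y (jn x y).
Proof. rewrite joinC. apply meet_absorb. Qed.

Lemma join_le x y z : le x z -> le y z -> le (jn x y) z.
Proof.
  unfold Defs.le; intros H1 H2. rewrite meetC, meet_distr, (meetC A z x), (meetC A z y), H1, H2.
  reflexivity.
Qed.

Lemma le_top x : le x tp.
Proof. apply meet_top. Qed.

Lemma le_bot x : le bt x.
Proof.
  unfold Defs.le. rewrite <- (join_bot A x) at 1. rewrite joinC. apply meet_absorb.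
Qed.

Lemma le_join_eq x y : le x y -> jn x y = y.
Proof.
  unfold Defs.le; intro H. rewrite <- H, joinC, meetC. apply join_absorb.
Qed.

Lemma imp_le_top x y : le x y -> imp A x y = tp.
Proof.
  intro H. pose proof (imp_join A x y y) as E. rewrite le_join_eq in E by exact H.
  rewrite imp_refl, meet_top in E. exact (eq_sym E).
Qed.

Lemma coimp_le_bot x y : le x y -> coimp A x y = bt.
Proof.
  intro H. pose proof (coimp_join A x y y) as E. rewrite le_join_eq in E by exact H.
  rewrite coimp_refl, join_bot in E. exact (eq_sym E).
Qed.

Section PFfacts.
Variable P : PF A.
Lemma pf_top : mem tp P.
Proof. destruct (proj2_sig P) as [h _]; exact h. Qed.
Lemma pf_bot : ~ mem bt P.
Proof. destruct (proj2_sig P) as [_ [h _]]; exact h. Qed.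
Lemma pf_up x y : mem x P -> le x y -> mem y P.
Proof. destruct (proj2_sig P) as [_ [_ [h _]]]; exact (h x y). Qed.
Lemma pf_meet x y : mem x P -> mem y P -> mem (mt x y) P.
Proof. destruct (proj2_sig P) as [_ [_ [_ [h _]]]]; exact (h x y). Qed.
Lemma pf_join x y : mem (jn x y) P -> mem x P \/ mem y P.
Proof. destruct (proj2_sig P) as [_ [_ [_ [_ h]]]]; exact (h x y). Qed.
Lemma pf_meet_iff x y : mem (mt x y) P <-> mem x P /\ mem y P.
Proof.
  split. intro H; split; eapply pf_up; eauto using meet_le_l, meet_le_r.
  intros [H1 H2]; apply pf_meet; auto.
Qed.
Lemma pf_join_iff x y : mem (jn x y) P <-> mem x P \/ mem y P.
Proof.
  split. apply pf_join.
  intros [H|H]; eapply pf_up; eauto using le_join_l, le_join_r.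
Qed.
End PFfacts.

Section Sep.
Variable rel : A -> A -> Prop.
Hypothesis Hle : forall x y, le x y -> rel x y.
Hypothesis Htr : forall x y z, rel x y -> rel y z -> rel x z.
Hypothesis Hm : forall x y z, rel x y -> rel x z -> rel x (mt y z).
Hypothesis Hj : forall x y z, rel x z -> rel y z -> rel (jn x y) z.

Definition valid (b a : A) (F : A -> Prop) : Prop :=
  F b /\ (forall x y, F x -> rel x y -> F y) /\
  (forall x y, F x -> F y -> F (mt x y)) /\ ~ F a.

Lemma separation (b a : A) : ~ rel b a ->
  exists Q : PF A, mem b Q /\ ~ mem a Q /\ forall x y, rel x y -> mem x Q -> mem y Q.
Proof.
  intro Hba.
  set (T := { F : A -> Prop | valid b a F }).
  assert (V0 : valid b a (fun y => rel b y)).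
  { repeat split.
    - apply Hle, le_refl.
    - intros x y H1 H2; eauto.
    - intros x y H1 H2; auto.
    - exact Hba. }
  set (t0 := exist _ _ V0 : T).
  destruct (@zornP T t0 (fun s t => forall x, proj1_sig s x -> proj1_sig t x)) as [[F VF] HF].
  - intros t x H; exact H.
  - intros r s t H1 H2 x H; auto.
  - intros C HC.
    destruct (classic (exists s, C s)) as [[s0 Cs0]|NC].
    + set (U := fun x => exists s, C s /\ proj1_sig s x).
      assert (VU : valid b a U).
      { destruct (proj2_sig s0) as [Vb _].
        repeat split.
        - exists s0; auto.
        - intros x y [s [Cs Hx]] Hxy. exists s; split; auto.
          destruct (proj2_sig s) as [_ [Hu _]]; eauto.
        - intros x y [s [Cs Hx]] [t [Ct Hy]].
          destruct (HC s t Cs Ct) as [H|H].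
          + exists t; split; auto. destruct (proj2_sig t) as [_ [_ [Hmt _]]]; auto.
          + exists s; split; auto. destruct (proj2_sig s) as [_ [_ [Hmt _]]]; auto.
        - intros [s [Cs Ha]]. destruct (proj2_sig s) as [_ [_ [_ Na]]]; auto. }
      exists (exist _ U VU). intros s Cs x Hx. simpl. exists s; auto.
    + exists t0. intros s Cs; exfalso; apply NC; exists s; exact Cs.
  - simpl in HF. destruct VF as [Fb [Fu [Fm Fa]]].
    assert (Ext : forall x, ~ F x -> exists f, F f /\ rel (mt f x) a).
    { intros x Nx. apply NNPP; intro NE.
      set (Fx := fun z => exists f, F f /\ rel (mt f x) z).
      assert (VFx : valid b a Fx).
      { repeat split.
        - exists b; split; auto. apply Hle, meet_le_l.
        - intros y z [f [Ff Hf]] Hyz. exists f; split; eauto.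
        - intros y z [f1 [Ff1 H1]] [f2 [Ff2 H2]]. exists (mt f1 f2); split; auto.
          apply Hm.
          + eapply Htr; [|exact H1]. apply Hle, le_meet.
            * eapply le_trans; [apply meet_le_l|apply meet_le_l].
            * apply meet_le_r.
          + eapply Htr; [|exact H2]. apply Hle, le_meet.
            * eapply le_trans; [apply meet_le_l|apply meet_le_r].
            * apply meet_le_r.
        - intros [f [Ff Hf]]. apply NE; exists f; auto. }
      assert (Sub : forall z, F z -> Fx z).
      { intros z Fz. exists z; split; auto. apply Hle, meet_le_l. }
      pose proof (HF (exist _ Fx VFx) Sub x) as Hx. simpl in Hx.
      apply Nx, Hx. exists b; split; auto. apply Hle, meet_le_r. }
    assert (PFF : prime_filter A F).
    { repeat split.
      - apply (Fu b); auto. apply Hle, le_top.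
      - intro Fbot. apply Fa. apply (Fu bt); auto. apply Hle, le_bot.
      - intros x y Fx Hxy. apply (Fu x); auto.
      - exact Fm.
      - intros x y Fxy. apply NNPP; intro N.
        destruct (Ext x) as [f1 [Ff1 H1]]; [intro; apply N; auto|].
        destruct (Ext y) as [f2 [Ff2 H2]]; [intro; apply N; auto|].
        apply Fa. set (f := mt f1 f2).
        apply (Fu (mt f (jn x y))).
        + apply Fm; auto. unfold f; auto.
        + rewrite meet_distr. apply Hj.
          * eapply Htr; [|exact H1]. apply Hle, le_meet.
            -- unfold f. eapply le_trans; [apply meet_le_l|apply meet_le_l].
            -- apply meet_le_r.
          * eapply Htr; [|exact H2]. apply Hle, le_meet.
            -- unfold f. eapply le_trans; [apply meet_le_l|apply meet_le_r].
            -- apply meet_le_r. }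
    exists (exist _ F PFF). unfold mem; simpl. repeat split; auto.
    intros x y Hxy Fx. eauto.
Qed.
End Sep.

Lemma KR (P : PF A) c d :
  (forall Q, R_A P Q -> mem c Q -> mem d Q) <-> mem (imp A c d) P.
Proof.
  split.
  - intro H. apply NNPP; intro N.
    destruct (separation (fun x y => mem (imp A x y) P)) with (b := c) (a := d)
      as [Q [Hc [Hd Hu]]]; auto.
    + intros x y Hxy. rewrite imp_le_top by exact Hxy. apply pf_top.
    + intros x y z H1 H2. eapply pf_up; [|apply (imp_trans A x y z)].
      apply pf_meet; auto.
    + intros x y z H1 H2. rewrite imp_meet. apply pf_meet; auto.
    + intros x y z H1 H2. rewrite imp_join. apply pf_meet; auto.
  - intros H Q HR Hc. exact (HR c d H Hc).
Qed.

Lemma KS (P : PF A) a b :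
  (forall Q, S_A P Q -> mem a Q -> mem b Q) <-> ~ mem (coimp A a b) P.
Proof.
  split.
  - intros H N.
    destruct (separation (fun x y => ~ mem (coimp A x y) P)) with (b := a) (a := b)
      as [Q [Ha [Hb Hu]]]; auto.
    + intros x y Hxy. rewrite coimp_le_bot by exact Hxy. apply pf_bot.
    + intros x y z H1 H2 H3. pose proof (coimp_trans A x y z) as E.
      assert (M : mem (meet A (coimp A x z) (join A (coimp A x y) (coimp A y z))) P)
        by (rewrite E; exact H3).
      apply pf_meet_iff in M. destruct M as [_ M]. apply pf_join in M. tauto.
    + intros x y z H1 H2 H3. rewrite coimp_meet in H3. apply pf_join in H3. tauto.
    + intros x y z H1 H2 H3. rewrite coimp_join in H3. apply pf_join in H3. tauto.
    + apply Hb. apply H; auto. intros x y Hx Hy. apply NNPP; intro N'.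
      apply Hy. exact (Hu x y N' Hx).
  - intros N Q HS Ha. apply NNPP; intro Nb. apply N. exact (HS a b Ha Nb).
Qed.

Lemma R_S (P Q : PF A) : R_A P Q <-> S_A Q P.
Proof.
  split.
  - intros HR x y Hx Hy.
    pose proof (ax_mix2 A x y) as E.
    assert (M : mem (join A y (imp A tp (coimp A x y))) P).
    { eapply pf_up; [exact Hx|]. exact E. }
    apply pf_join in M. destruct M as [M|M]; [contradiction|].
    exact (HR _ _ M (pf_top Q)).
  - intros HS c d Hcd Hc.
    assert (M : mem (coimp A (imp A c d) bt) Q) by (apply HS; auto; apply pf_bot).
    eapply pf_up; [|apply (ax_mix1 A c d)]. apply pf_meet; auto.
Qed.

Inductive clo (T : A -> A -> Prop) : A -> A -> Prop :=
| c_le x y : le x y -> clo T x y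
| c_T x y : T x y -> clo T x y
| c_tr x y z : clo T x y -> clo T y z -> clo T x z
| c_m x y z : clo T x y -> clo T x z -> clo T x (mt y z)
| c_j x y z : clo T x z -> clo T y z -> clo T (jn x y) z.

Definition sat (K : list (A * A)) (Q : PF A) : Prop :=
  forall k, In k K -> mem (fst k) Q -> mem (snd k) Q.

Lemma sat_app K1 K2 Q : sat (K1 ++ K2) Q <-> sat K1 Q /\ sat K2 Q.
Proof.
  unfold sat; split.
  - intro H; split; intros k Hk; apply H; apply in_or_app; auto.
  - intros [H1 H2] k Hk. apply in_app_or in Hk. destruct Hk; auto.
Qed.

Lemma clo_fin T x y : clo T x y ->
  exists K, (forall k, In k K -> T (fst k) (snd k)) /\
            forall Q, sat K Q -> mem x Q -> mem y Q.
Proof.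
  induction 1.
  - exists []; split; [intros k []|]. intros Q _ Hx. eapply pf_up; eauto.
  - exists [(x, y)]; split.
    + intros k [<-|[]]; auto.
    + intros Q HK Hx. apply (HK (x, y)); simpl; auto.
  - destruct IHclo1 as [K1 [T1 H1]], IHclo2 as [K2 [T2 H2]].
    exists (K1 ++ K2); split.
    + intros k Hk; apply in_app_or in Hk; destruct Hk; auto.
    + intros Q HK Hx. apply sat_app in HK. destruct HK. eauto.
  - destruct IHclo1 as [K1 [T1 H1]], IHclo2 as [K2 [T2 H2]].
    exists (K1 ++ K2); split.
    + intros k Hk; apply in_app_or in Hk; destruct Hk; auto.
    + intros Q HK Hx. apply sat_app in HK. destruct HK. apply pf_meet; eauto.
  - destruct IHclo1 as [K1 [T1 H1]], IHclo2 as [K2 [T2 H2]].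
    exists (K1 ++ K2); split.
    + intros k Hk; apply in_app_or in Hk; destruct Hk; auto.
    + intros Q HK Hx. apply sat_app in HK. destruct HK. apply pf_join in Hx.
      destruct Hx; eauto.
Qed.

Lemma basic_char (l : list (bool * A)) :
  exists m j, forall P, basic l P <-> mem m P /\ ~ mem j P.
Proof.
  induction l as [|[[|] a] l IH].
  - exists tp, bt. intro P; split.
    + intros _; split; [apply pf_top|apply pf_bot].
    + intros _ s [].
  - destruct IH as [m [j IH]]. exists (mt a m), j. intro P.
    rewrite pf_meet_iff. split.
    + intro H. assert (Hs : subbasic (true, a) P) by (apply H; simpl; auto).
      assert (Hl : basic l P) by (intros s Hs'; apply H; simpl; auto).
      apply IH in Hl. simpl in Hs. unfold sigma in Hs. tauto.
    + intros [[Ha Hm] Hj] s [<-|Hs].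
      * exact Ha.
      * apply (proj2 (IH P)); auto.
  - destruct IH as [m [j IH]]. exists m, (jn a j). intro P.
    rewrite pf_join_iff. split.
    + intro H. assert (Hs : subbasic (false, a) P) by (apply H; simpl; auto).
      assert (Hl : basic l P) by (intros s Hs'; apply H; simpl; auto).
      apply IH in Hl. unfold subbasic in Hs; simpl in Hs. unfold compl, sigma in Hs. tauto.
    + intros [Hm Hj] s [<-|Hs].
      * unfold subbasic; simpl. unfold compl, sigma. tauto.
      * apply (proj2 (IH P)); auto.
Qed.

Lemma basic_app (l1 l2 : list (bool * A)) P :
  basic (l1 ++ l2) P <-> basic l1 P /\ basic l2 P.
Proof.
  unfold basic; split.
  - intro H; split; intros s Hs; apply H; apply in_or_app; auto.
  - intros [H1 H2] s Hs. apply in_app_or in Hs. destruct Hs; auto.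
Qed.

Definition rep (U : pfset A) : Prop :=
  exists K : list (A * A), forall P, U P <-> sat K P.

Lemma filter_ex {X : Type} (p : X -> Prop) (l : list X) :
  exists l', forall x, In x l' <-> In x l /\ p x.
Proof.
  induction l as [|x l [l' IH]].
  - exists []. intro x; simpl; tauto.
  - destruct (classic (p x)) as [Hx|Hx].
    + exists (x :: l'). intro y; simpl. rewrite IH. split.
      * intros [<-|H]; tauto.
      * intros [[<-|H] Hp]; tauto.
    + exists l'. intro y; simpl. rewrite IH. split.
      * tauto.
      * intros [[<-|H] Hp]; tauto.
Qed.

Lemma clopen_rep U : clopen U -> rep U.
Proof.
  intros [HU HC].
  set (T := fun x y => (forall Q, mem x Q -> ~ mem y Q -> ~ U Q) \/
                       (forall Q, mem x Q -> ~ mem y Q -> U Q)).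
  assert (Hc : clo T tp bt).
  { apply NNPP; intro N.
    destruct (separation (clo T)) with (b := tp) (a := bt) as [Q [_ [_ Hu]]]; auto.
    - apply c_le.
    - apply c_tr.
    - apply c_m.
    - apply c_j.
    - destruct (classic (U Q)) as [UQ|UQ].
      + destruct (HU Q UQ) as [l [Hl Hs]].
        destruct (basic_char l) as [m [j Hmj]].
        assert (Tmj : T m j).
        { right. intros Q' H1 H2. apply Hs. apply Hmj; auto. }
        apply Hmj in Hl. destruct Hl as [Hm Hj].
        apply Hj. exact (Hu m j (c_T T m j Tmj) Hm).
      + destruct (HC Q UQ) as [l [Hl Hs]].
        destruct (basic_char l) as [m [j Hmj]].
        assert (Tmj : T m j).
        { left. intros Q' H1 H2. apply Hs. apply Hmj; auto. }
        apply Hmj in Hl. destruct Hl as [Hm Hj].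
        apply Hj. exact (Hu m j (c_T T m j Tmj) Hm). }
  destruct (clo_fin _ _ _ Hc) as [K [TK HK]].
  destruct (filter_ex (fun k => forall Q, mem (fst k) Q -> ~ mem (snd k) Q -> ~ U Q) K)
    as [K' HK'].
  exists K'. intro P. split.
  - intros UP k Hk Hf. apply HK' in Hk. destruct Hk as [_ Hp].
    apply NNPP; intro Ns. exact (Hp P Hf Ns UP).
  - intros HS. apply NNPP; intro NU.
    assert (NS : ~ sat K P) by (intro S; exact (pf_bot P (HK P S (pf_top P)))).
    unfold sat in NS. apply not_all_ex_not in NS. destruct NS as [k NS].
    assert (Hk : In k K) by tauto.
    assert (Hf : mem (fst k) P) by tauto.
    assert (Hs : ~ mem (snd k) P) by tauto.
    destruct (TK k Hk) as [Hl|Hr].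
    + apply Hs. apply HS; auto. apply HK'. split; auto.
    + exact (NU (Hr P Hf Hs)).
Qed.

Lemma sat_open K P : sat K P ->
  exists l, basic l P /\ forall Q, basic l Q -> sat K Q.
Proof.
  induction K as [|k K IH].
  - intros _. exists []. split; [intros s []|]. intros Q _ k [].
  - intro H. assert (HK : sat K P) by (intros k' Hk'; apply H; simpl; auto).
    destruct (IH HK) as [l [Hl Hs]].
    destruct (classic (mem (fst k) P)) as [Hf|Hf].
    + exists ((true, snd k) :: l). split.
      * intros s [<-|Hs']; [simpl; unfold sigma; apply H; simpl; auto|auto].
      * intros Q HQ k' [<-|Hk'].
        -- intros _. apply (HQ (true, snd k)). simpl; auto.
        -- apply Hs; auto. intros s Hs'; apply HQ; simpl; auto.
    + exists ((false, fst k) :: l). split.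
      * intros s [<-|Hs']; [simpl; unfold compl, sigma; exact Hf|auto].
      * intros Q HQ k' [<-|Hk'].
        -- intro Hq. exfalso. apply (HQ (false, fst k)); simpl; auto.
        -- apply Hs; auto. intros s Hs'; apply HQ; simpl; auto.
Qed.

Lemma rep_clopen U : rep U -> clopen U.
Proof.
  intros [K HK]. split.
  - intros P UP. apply HK in UP. destruct (sat_open _ _ UP) as [l [Hl Hs]].
    exists l; split; auto. intros Q HQ. apply HK; auto.
  - intros P NU. assert (NS : ~ sat K P) by (intro S; apply NU, HK, S).
    unfold sat in NS. apply not_all_ex_not in NS. destruct NS as [k NS].
    exists [(true, fst k); (false, snd k)]. split.
    + intros s [<-|[<-|[]]]; simpl; unfold compl, sigma; tauto.
    + intros Q HQ UQ. apply HK in UQ.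
      apply (HQ (false, snd k)); simpl; auto.
      apply UQ; [tauto|]. apply (HQ (true, fst k)); simpl; auto.
Qed.

Lemma rep_G U : rep U -> rep (G_A U).
Proof.
  intros [K HK]. exists (map (fun k => (tp, imp A (fst k) (snd k))) K).
  intro P. split.
  - intros HG k' Hk' _. apply in_map_iff in Hk'. destruct Hk' as [k [<- Hk]]. simpl.
    apply KR. intros Q HR Hf. apply (proj1 (HK Q) (HG Q HR)); auto.
  - intros HS Q HR. apply HK. intros k Hk Hf.
    assert (M : mem (imp A (fst k) (snd k)) P).
    { apply (HS (tp, imp A (fst k) (snd k))).
      - apply in_map_iff. exists k; auto.
      - apply pf_top. }
    exact (HR _ _ M Hf).
Qed.

Lemma rep_H U : rep U -> rep (H_A U).
Proof.
  intros [K HK]. exists (map (fun k => (coimp A (fst k) (snd k), bt)) K).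
  intro P. split.
  - intros HH k' Hk' Hm. apply in_map_iff in Hk'. destruct Hk' as [k [<- Hk]]. simpl in *.
    exfalso. apply (proj1 (KS P (fst k) (snd k))); auto.
    intros Q HS Hf. apply (proj1 (HK Q) (HH Q HS)); auto.
  - intros HS Q HSQ. apply HK. intros k Hk Hf.
    apply (proj2 (KS P (fst k) (snd k))); auto.
    intro M. apply (pf_bot P).
    apply (HS (coimp A (fst k) (snd k), bt)); auto.
    apply in_map_iff. exists k; auto.
Qed.

End W.

Theorem lemma6p1 (A : WHB) :
  tense_algebra_of_sets (@clopen A) (@G_A A) (@H_A A).
Proof.
  unfold tense_algebra_of_sets. cbv zeta.
  split; [|split; [|split; [|split; [|split; [|split; [|split; [|split]]]]]]].
  - split.
    + intros P [].
    + intros P _. exists []. split; [intros s []|]. intros Q _ H; exact H.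
  - split.
    + intros P _. exists []. split; [intros s []|]. intros Q _; exact I.
    + intros P H; exfalso; apply H; exact I.
  - intros U V [HU HU'] [HV HV']. split.
    + intros P [H|H].
      * destruct (HU P H) as [l [Hl Hs]]. exists l; split; auto. intros Q HQ; left; auto.
      * destruct (HV P H) as [l [Hl Hs]]. exists l; split; auto. intros Q HQ; right; auto.
    + intros P H.
      destruct (HU' P (fun h => H (or_introl h))) as [l1 [Hl1 Hs1]].
      destruct (HV' P (fun h => H (or_intror h))) as [l2 [Hl2 Hs2]].
      exists (l1 ++ l2). split.
      * apply basic_app; auto.
      * intros Q HQ. apply basic_app in HQ. destruct HQ as [H1 H2].
        intros [h|h]; [exact (Hs1 Q H1 h)|exact (Hs2 Q H2 h)].
  - intros U V [HU HU'] [HV HV']. split.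
    + intros P [H1 H2].
      destruct (HU P H1) as [l1 [Hl1 Hs1]].
      destruct (HV P H2) as [l2 [Hl2 Hs2]].
      exists (l1 ++ l2). split.
      * apply basic_app; auto.
      * intros Q HQ. apply basic_app in HQ. destruct HQ as [Q1 Q2]. split; auto.
    + intros P H. destruct (classic (U P)) as [UP|UP].
      * assert (NV : ~ V P) by (intro; apply H; split; auto).
        destruct (HV' P NV) as [l [Hl Hs]]. exists l; split; auto.
        intros Q HQ [_ h]. exact (Hs Q HQ h).
      * destruct (HU' P UP) as [l [Hl Hs]]. exists l; split; auto.
        intros Q HQ [h _]. exact (Hs Q HQ h).
  - intros U [HU HU']. split.
    + exact HU'.
    + intros P H. apply NNPP in H. destruct (HU P H) as [l [Hl Hs]].
      exists l; split; auto. intros Q HQ N. exact (N (Hs Q HQ)).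
  - intros U HU. apply rep_clopen, rep_G, clopen_rep, HU.
  - intros U HU. apply rep_clopen, rep_H, clopen_rep, HU.
  - intros U V _ _. split.
    + intros H Q UQ P HR. apply H. intro N. exact (N Q (proj1 (R_S _ Q P) HR) UQ).
    + intros H P N. unfold H_A, G_A in N. apply not_all_ex_not in N. destruct N as [Q N].
      assert (HS : S_A P Q) by tauto. assert (UQ : U Q) by tauto.
      exact (H Q UQ P (proj2 (R_S _ Q P) HS)).
  - intros U V _ _. split.
    + intros H Q UQ P HS. apply H. intro N. exact (N Q (proj2 (R_S _ P Q) HS) UQ).
    + intros H P N. unfold H_A, G_A in N. apply not_all_ex_not in N. destruct N as [Q N].
      assert (HR : R_A P Q) by tauto. assert (UQ : U Q) by tauto.
      exact (H Q UQ P (proj1 (R_S _ P Q) HR)).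
Qed.
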